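(* Let $\mathbb{A}$ be a 2-category and $p:e\to b$ a 1-cell such that $\mathbb{A}$ has the two-dimensional cokernel diagram of $p$ and a right Kan extension $(t,\gamma)$ of $p$ along $p$ exists. Let $\ell:b\uparrow_pb\to b$ be the unique 1-cell with $\ell\delta^0=\mathrm{id}_b$, $\ell\delta^1=t$ and $\mathrm{id}_\ell\ast\alpha=\gamma$. Then $(t,\gamma)$ is preserved by $\delta^0:b\to b\uparrow_pb$ if and only if $\ell$ is left adjoint to $\delta^0$. In this case there is an adjunction $\ell\dashv\delta^0$ whose counit is the identity 2-cell $\mathrm{id}_{\mathrm{id}_b}:\ell\delta^0\Rightarrow\mathrm{id}_b$.
   Context: A 2-category is a $\mathbf{Cat}$-enriched category; composition of 1-cells is juxtaposition, vertical composition of 2-cells is $\cdot$, horizontal composition is $\ast$, $\mathrm{id}_f$ is the identity 2-cell on $f$. Opcomma object of $p$ along itself: an object $b\uparrow_p b$ with 1-cells $\delta^0,\delta^1:b\to b\uparrow_p b$ and a 2-cell $\alpha:\delta^1p\Rightarrow\delta^0p$ such that for every object $y$ the functor $h\mapsto(h\delta^0,h\delta^1,\mathrm{id}_h\ast\alpha)$, $\xi\mapsto(\xi\ast\mathrm{id}_{\delta^0},\xi\ast\mathrm{id}_{\delta^1})$ is an isomorphism from $\mathbb{A}(b\uparrow_p b,y)$ onto the category of triples $(h_0,h_1:b\to y,\ \beta:h_1p\Rightarrow h_0p)$ with morphisms pairs of 2-cells $(\xi_0:h_0\Rightarrow h_0',\xi_1:h_1\Rightarrow h_1')$ satisfying $(\xi_0\ast\mathrm{id}_p)\cdot\beta=\beta'\cdot(\xi_1\ast\mathrm{id}_p)$.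 Two-dimensional pushout of a span $f_0:c\to c_0$, $f_1:c\to c_1$: an object $P$ with $q_0:c_0\to P$, $q_1:c_1\to P$, $q_0f_0=q_1f_1$, such that for every $y$, $k\mapsto(kq_0,kq_1)$ is an isomorphism from $\mathbb{A}(P,y)$ onto the category of pairs $(k_0,k_1)$ with $k_0f_0=k_1f_1$, whose morphisms are pairs of 2-cells $(\xi_0,\xi_1)$ with $\xi_0\ast\mathrm{id}_{f_0}=\xi_1\ast\mathrm{id}_{f_1}$. $\mathbb{A}$ has the two-dimensional cokernel diagram of $p$ if it has an opcomma object $b\uparrow_p b$ of $p$ along itself and a two-dimensional pushout $b\uparrow_pb\uparrow_pb$ of the span $(\delta^0,\delta^1)$, with 1-cells $D^0,D^2:b\uparrow_pb\to b\uparrow_pb\uparrow_pb$ satisfying $D^2\delta^0=D^0\delta^1$. Right Kan extension of $f:z\to y$ along $g:z\to x$: a pair $(r:x\to y,\gamma:rg\Rightarrow f)$ such that for each $k:x\to y$, $\beta\mapsto\gamma\cdot(\beta\ast\mathrm{id}_g)$ is a bijection from 2-cells $k\Rightarrow r$ to 2-cells $kg\Rightarrow f$. A 1-cell $d:y\to y'$ preserves this right Kan extension if $(dr,\mathrm{id}_d\ast\gamma)$ is a right Kan extension of $df$ along $g$. *)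

(* Defs.v *)
(* A strict 2-category (Cat-enriched category)
   presented globularly: 2-cells between objects a,b form a type [cell a b]
   with source/target 1-cells [s2]/[t2]; composition laws are required
   for composable cells.  Juxtaposition [g f] = [comp1 g f] (g after f). *)

Set Implicit Arguments.
Unset Strict Implicit.

Record TwoCat := {
  ob : Type;
  hom : ob -> ob -> Type;
  cell : ob -> ob -> Type;
  s2 : forall a b, cell a b -> hom a b;
  t2 : forall a b, cell a b -> hom a b;
  id1 : forall a, hom a a;
  comp1 : forall a b c, hom b c -> hom a b -> hom a c;
  id2 : forall a b, hom a b -> cell a b;
  vcomp : forall a b, cell a b -> cell a b -> cell a b; (* vcomp beta alpha = beta . alpha *)
  hcomp : forall a b c, cell b c -> cell a b -> cell a c;
  comp1_assoc : forall a b c d (h : hom c d) (g : hom b c) (f : hom a b),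
      comp1 h (comp1 g f) = comp1 (comp1 h g) f;
  comp1_id_l : forall a b (f : hom a b), comp1 (id1 b) f = f;
  comp1_id_r : forall a b (f : hom a b), comp1 f (id1 a) = f;
  s2_id2 : forall a b (f : hom a b), s2 (id2 f) = f;
  t2_id2 : forall a b (f : hom a b), t2 (id2 f) = f;
  s2_vcomp : forall a b (be al : cell a b), t2 al = s2 be -> s2 (vcomp be al) = s2 al;
  t2_vcomp : forall a b (be al : cell a b), t2 al = s2 be -> t2 (vcomp be al) = t2 be;
  vcomp_assoc : forall a b (ga be al : cell a b), t2 al = s2 be -> t2 be = s2 ga ->
      vcomp ga (vcomp be al) = vcomp (vcomp ga be) al;
  vcomp_id_r : forall a b (al : cell a b), vcomp al (id2 (s2 al)) = al;
  vcomp_id_l : forall a b (al : cell a b), vcomp (id2 (t2 al)) al = al;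
  s2_hcomp : forall a b c (be : cell b c) (al : cell a b),
      s2 (hcomp be al) = comp1 (s2 be) (s2 al);
  t2_hcomp : forall a b c (be : cell b c) (al : cell a b),
      t2 (hcomp be al) = comp1 (t2 be) (t2 al);
  hcomp_id2 : forall a b c (g : hom b c) (f : hom a b),
      hcomp (id2 g) (id2 f) = id2 (comp1 g f);
  interchange : forall a b c (be' be : cell b c) (al' al : cell a b),
      t2 be = s2 be' -> t2 al = s2 al' ->
      hcomp (vcomp be' be) (vcomp al' al) = vcomp (hcomp be' al') (hcomp be al);
  hcomp_assoc : forall a b c d (ga : cell c d) (be : cell b c) (al : cell a b),
      hcomp ga (hcomp be al) = hcomp (hcomp ga be) al;
  hcomp_id_l : forall a b (al : cell a b), hcomp (id2 (id1 b)) al = al;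
  hcomp_id_r : forall a b (al : cell a b), hcomp al (id2 (id1 a)) = al
}.

Arguments hom {t} _ _.
Arguments cell {t} _ _.
Arguments s2 {t a b} _.
Arguments t2 {t a b} _.
Arguments id1 {t} _.
Arguments comp1 {t a b c} _ _.
Arguments id2 {t a b} _.
Arguments vcomp {t a b} _ _.
Arguments hcomp {t a b c} _ _.

Unset Implicit Arguments.
Section Defs.
Context {A : TwoCat}.

Definition is2 {a b : ob A} (al : cell a b) (f g : hom a b) : Prop :=
  s2 al = f /\ t2 al = g.

(* Opcomma object (P, d0, d1, al) of p : e -> b along itself:
   al : d1 p => d0 p, and for every y the comparison functor
   A(P,y) -> triples is an isomorphism of categories, i.e. bijective
   on objects and on each hom-set. *)
Definition is_opcomma {e b : ob A} (p : hom e b)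
  (P : ob A) (d0 d1 : hom b P) (al : cell e P) : Prop :=
  is2 al (comp1 d1 p) (comp1 d0 p) /\
  forall y : ob A,
    (forall (h0 h1 : hom b y) (be : cell e y),
        is2 be (comp1 h1 p) (comp1 h0 p) ->
        exists! h : hom P y,
          comp1 h d0 = h0 /\ comp1 h d1 = h1 /\ hcomp (id2 h) al = be) /\
    (forall (h h' : hom P y) (xi0 xi1 : cell b y),
        is2 xi0 (comp1 h d0) (comp1 h' d0) ->
        is2 xi1 (comp1 h d1) (comp1 h' d1) ->
        vcomp (hcomp xi0 (id2 p)) (hcomp (id2 h) al)
          = vcomp (hcomp (id2 h') al) (hcomp xi1 (id2 p)) ->
        exists! xi : cell P y,
          is2 xi h h' /\ hcomp xi (id2 d0) = xi0 /\ hcomp xi (id2 d1) = xi1).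

Definition is_pushout2 {c c0 c1 : ob A} (f0 : hom c c0) (f1 : hom c c1)
  (Q : ob A) (q0 : hom c0 Q) (q1 : hom c1 Q) : Prop :=
  comp1 q0 f0 = comp1 q1 f1 /\
  forall y : ob A,
    (forall (k0 : hom c0 y) (k1 : hom c1 y),
        comp1 k0 f0 = comp1 k1 f1 ->
        exists! k : hom Q y, comp1 k q0 = k0 /\ comp1 k q1 = k1) /\
    (forall (k k' : hom Q y) (xi0 : cell c0 y) (xi1 : cell c1 y),
        is2 xi0 (comp1 k q0) (comp1 k' q0) ->
        is2 xi1 (comp1 k q1) (comp1 k' q1) ->
        hcomp xi0 (id2 f0) = hcomp xi1 (id2 f1) ->
        exists! xi : cell Q y,
          is2 xi k k' /\ hcomp xi (id2 q0) = xi0 /\ hcomp xi (id2 q1) = xi1).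

Definition is_ran {x y z : ob A} (f : hom z y) (g : hom z x)
  (r : hom x y) (ga : cell z y) : Prop :=
  is2 ga (comp1 r g) f /\
  forall (k : hom x y) (de : cell z y),
    is2 de (comp1 k g) f ->
    exists! be : cell x y, is2 be k r /\ vcomp ga (hcomp be (id2 g)) = de.

Definition preserves_ran {x y y' z : ob A} (f : hom z y) (g : hom z x)
  (r : hom x y) (ga : cell z y) (d : hom y y') : Prop :=
  is_ran (comp1 d f) g (comp1 d r) (hcomp (id2 d) ga).

Definition adjunction {a b : ob A} (l : hom a b) (r : hom b a)
  (eta : cell a a) (eps : cell b b) : Prop :=
  is2 eta (id1 a) (comp1 r l) /\ is2 eps (comp1 l r) (id1 b) /\
  vcomp (hcomp eps (id2 l)) (hcomp (id2 l) eta) = id2 l /\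
  vcomp (hcomp (id2 r) eps) (hcomp eta (id2 r)) = id2 r.

Definition left_adjoint {a b : ob A} (l : hom a b) (r : hom b a) : Prop :=
  exists eta eps, adjunction l r eta eps.

End Defs.

(* Main.v *)
Require Import Defs.

Ltac heq_extra := idtac.
Ltac heq := repeat (progress (repeat rewrite <- comp1_assoc; rewrite ?comp1_id_l, ?comp1_id_r; heq_extra)); reflexivity.

Ltac st := repeat first [
    progress rewrite ?s2_id2, ?t2_id2, ?s2_hcomp, ?t2_hcomp
  | match goal with
    | H : is2 ?x _ _ |- context [s2 ?x] => rewrite (proj1 H)
    | H : is2 ?x _ _ |- context [t2 ?x] => rewrite (proj2 H)
    | |- context [s2 (vcomp ?b ?a)] => rewrite (@s2_vcomp _ _ _ b a) by (st; heq)
    | |- context [t2 (vcomp ?b ?a)] => rewrite (@t2_vcomp _ _ _ b a) by (st; heq)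
    end ].

Ltac typ := split; st; heq.

Section Infra.
Context {A : TwoCat}.

Lemma is2_id2 {a b : ob A} (f : hom a b) : is2 (id2 f) f f.
Proof. split; [apply s2_id2 | apply t2_id2]. Qed.

Lemma vid_l {a b : ob A} (x : cell a b) f g : is2 x f g -> vcomp (id2 g) x = x.
Proof. intros [H1 H2]; subst; apply vcomp_id_l. Qed.
Lemma vid_r {a b : ob A} (x : cell a b) f g : is2 x f g -> vcomp x (id2 f) = x.
Proof. intros [H1 H2]; subst; apply vcomp_id_r. Qed.
Lemma vassoc {a b : ob A} (x y z : cell a b) f g h k :
  is2 x f g -> is2 y g h -> is2 z h k -> vcomp z (vcomp y x) = vcomp (vcomp z y) x.
Proof. intros [? ?] [? ?] [? ?]; apply vcomp_assoc; congruence. Qed.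
Lemma idid {a b : ob A} (f : hom a b) : vcomp (id2 f) (id2 f) = id2 f.
Proof. apply (vid_l _ f f), is2_id2. Qed.

Lemma wl_v {a b c : ob A} (h : hom b c) (x y : cell a b) f g k :
  is2 x f g -> is2 y g k -> hcomp (id2 h) (vcomp y x) = vcomp (hcomp (id2 h) y) (hcomp (id2 h) x).
Proof. intros [? ?] [? ?].
  transitivity (hcomp (vcomp (id2 h) (id2 h)) (vcomp y x)); [rewrite idid; reflexivity|].
  apply interchange; [rewrite s2_id2, t2_id2; reflexivity | congruence]. Qed.
Lemma wr_v {a b c : ob A} (h : hom a b) (x y : cell b c) f g k :
  is2 x f g -> is2 y g k -> hcomp (vcomp y x) (id2 h) = vcomp (hcomp y (id2 h)) (hcomp x (id2 h)).
Proof. intros [? ?] [? ?].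
  transitivity (hcomp (vcomp y x) (vcomp (id2 h) (id2 h))); [rewrite idid; reflexivity|].
  apply interchange; [congruence | rewrite s2_id2, t2_id2; reflexivity]. Qed.

Lemma nat_ic {a b c : ob A} (be : cell b c) (x : cell a b) f f' g g' :
  is2 be f f' -> is2 x g g' ->
  vcomp (hcomp be (id2 g')) (hcomp (id2 f) x) = vcomp (hcomp (id2 f') x) (hcomp be (id2 g)).
Proof. intros Hb Hx.
  transitivity (hcomp be x).
  - rewrite <- interchange. rewrite (vid_r be f f'), (vid_l x g g'); auto.
    destruct Hb; rewrite t2_id2; congruence. destruct Hx; rewrite s2_id2; congruence.
  - rewrite <- interchange. rewrite (vid_l be f f'), (vid_r x g g'); auto.
    destruct Hb; rewrite s2_id2; congruence. destruct Hx; rewrite t2_id2; congruence.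
Qed.

Lemma wll {a b c d : ob A} (h : hom c d) (k : hom b c) (x : cell a b) :
  hcomp (id2 h) (hcomp (id2 k) x) = hcomp (id2 (comp1 h k)) x.
Proof. rewrite hcomp_assoc, hcomp_id2; reflexivity. Qed.
Lemma wrr {a b c d : ob A} (x : cell c d) (h : hom b c) (k : hom a b) :
  hcomp (hcomp x (id2 h)) (id2 k) = hcomp x (id2 (comp1 h k)).
Proof. rewrite <- hcomp_assoc, hcomp_id2; reflexivity. Qed.

End Infra.

Section S. Context {A : TwoCat}.
Lemma radj_pres {x y z y' : ob A} (f: hom z y) (g: hom z x) (r0: hom x y) (ga: cell z y)
  (l: hom y' y) (r: hom y y') eta eps :
  is_ran f g r0 ga -> adjunction l r eta eps -> preserves_ran f g r0 ga r.
Proof.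
  intros [Hga Hran] [Heta [Heps [T1 T2]]].
  split; [typ|].
  intros k de Hde.
  set (de' := vcomp (hcomp eps (id2 f)) (hcomp (id2 l) de)).
  assert (Hde' : is2 de' (comp1 (comp1 l k) g) f) by (unfold de'; typ).
  destruct (Hran _ _ Hde') as [be' [[Hbe' Ebe'] Ube']].
  exists (vcomp (hcomp (id2 r) be') (hcomp eta (id2 k))).
  split; [split; [typ|]|].
  - erewrite wr_v by typ.
    rewrite <- hcomp_assoc, wrr.
    erewrite vassoc by typ.
    erewrite <- wl_v by typ.
    rewrite Ebe'. unfold de'.
    erewrite wl_v by typ.
    erewrite <- vassoc by typ.
    rewrite wll.
    erewrite <- nat_ic by typ.
    rewrite hcomp_id_l.
    erewrite vassoc by typ.
    rewrite hcomp_assoc, <- (wrr eta r f).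
    erewrite <- wr_v by typ.
    rewrite T2, hcomp_id2.
    eapply vid_l; eauto.
  - intros be2 [Hbe2 Ebe2].
    set (be2' := vcomp (hcomp eps (id2 r0)) (hcomp (id2 l) be2)).
    assert (Hbe2' : is2 be2' (comp1 l k) r0) by (unfold be2'; typ).
    assert (E : be' = be2').
    { apply Ube'. split; [exact Hbe2'|].
      unfold be2'. erewrite wr_v by typ.
      rewrite wrr, <- hcomp_assoc.
      erewrite vassoc by typ.
      rewrite <- (hcomp_id_l ga).
      erewrite <- (nat_ic eps ga) by typ.
      erewrite <- vassoc by typ.
      rewrite <- wll.
      erewrite <- wl_v by typ.
      rewrite Ebe2. reflexivity. }
    rewrite E; unfold be2'.
    erewrite wl_v by typ.
    erewrite <- vassoc by typ.
    rewrite wll.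
    erewrite <- (nat_ic eta be2) by typ.
    rewrite hcomp_id_l.
    erewrite vassoc by typ.
    rewrite hcomp_assoc, <- (wrr eta r r0).
    erewrite <- wr_v by typ.
    rewrite T2, hcomp_id2.
    eapply vid_l; eauto.
Qed.
End S.

Ltac heq_extra ::= repeat match goal with
  | H : comp1 ?a ?b = _ |- context [comp1 ?a (comp1 ?b ?X)] => rewrite (comp1_assoc a b X), H
  | H : comp1 ?a ?b = _ |- context [comp1 ?a ?b] => rewrite H
  end.

Theorem proposition4p2 (A : TwoCat) (e b : ob A) (p : hom e b)
  (* two-dimensional cokernel diagram of p *)
  (P : ob A) (d0 d1 : hom b P) (al : cell e P)
  (Hop : is_opcomma p P d0 d1 al)
  (Q : ob A) (D0 D2 : hom P Q)
  (Hpo : is_pushout2 d0 d1 Q D2 D0)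
  (* right Kan extension (t, ga) of p along p *)
  (t : hom b b) (ga : cell e b)
  (Hran : is_ran p p t ga)
  (* the 1-cell l induced by (id_b, t, ga) *)
  (l : hom P b)
  (Hl0 : comp1 l d0 = id1 b) (Hl1 : comp1 l d1 = t)
  (Hla : hcomp (id2 l) al = ga) :
  (preserves_ran p p t ga d0 <-> left_adjoint l d0) /\
  (preserves_ran p p t ga d0 ->
     exists eta : cell P P, adjunction l d0 eta (id2 (id1 b))).
Proof.
  clear Hpo.
  assert (Hcon : preserves_ran p p t ga d0 ->
     exists eta : cell P P, adjunction l d0 eta (id2 (id1 b))).
  { intros [_ Hpr].
    destruct Hop as [Hal Hop2].
    destruct Hran as [Hga Hran2].
    destruct (Hpr d1 al) as [h1 [[Hh1 Eh1] _]]; [typ|].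
    destruct (proj2 (Hop2 P) (id1 P) (comp1 d0 l) (id2 d0) h1) as [eta [[Heta [E0 E1]] _]].
    - typ.
    - typ.
    - rewrite hcomp_id2, hcomp_id_l, <- wll, Hla, Eh1.
      eapply vid_l; typ.
    - assert (K2 : hcomp (id2 l) h1 = id2 t).
      { destruct (Hran2 t ga) as [u [_ Uu]]; [exact Hga|].
        transitivity u; [symmetry|]; apply Uu; split.
        - typ.
        - rewrite <- hcomp_assoc.
          transitivity (hcomp (id2 l) (vcomp (hcomp (id2 d0) ga) (hcomp h1 (id2 p)))).
          + erewrite wl_v by typ. rewrite wll, Hl0, hcomp_id_l. reflexivity.
          + rewrite Eh1; exact Hla.
        - apply is2_id2.
        - rewrite hcomp_id2. eapply vid_r; exact Hga. }
      assert (K : hcomp (id2 l) eta = id2 l).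
      { destruct (proj2 (Hop2 b) l l (id2 (comp1 l d0)) (id2 (comp1 l d1))) as [xi [_ Uxi]].
        - apply is2_id2.
        - apply is2_id2.
        - rewrite !hcomp_id2. erewrite vid_l by typ. erewrite vid_r by typ. reflexivity.
        - transitivity xi; [symmetry|]; apply Uxi; split.
          + typ.
          + split.
            * rewrite <- hcomp_assoc, E0, hcomp_id2. reflexivity.
            * rewrite <- hcomp_assoc, E1, K2, Hl1. reflexivity.
          + apply is2_id2.
          + rewrite !hcomp_id2. split; reflexivity. }
      exists eta. split; [exact Heta|]. split; [typ|]. split.
      + rewrite hcomp_id_l, K. apply idid.
      + rewrite E0, hcomp_id2, comp1_id_r. apply idid. }
  split; [|exact Hcon].
  split.
  - intros H. destruct (Hcon H) as [eta Hadj]. exists eta, (id2 (id1 b)). exact Hadj.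
  - intros [eta [eps Hadj]]. eapply radj_pres; eauto.
Qed.
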